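(* Let $K$ be the $n\times n$ pinned Laplacian of a digraph, with eigenvalues $\lambda_{K,i}=m_ie^{j\phi_i}$, $1\le i\le n$, satisfying $0<\underline m\le m_i\le\overline m$ and $|\phi_i|\le\overline\phi<\pi/2$. Let $\beta>0$ satisfy $\beta>\max_i 1/\mathrm{Re}\{\lambda_{K,i}\}$ and $\beta\underline m\cos\overline\phi>1$, and define $$\overline\rho=\sqrt{(\beta\overline m\sin\overline\phi)^2+(\beta\overline m\cos\overline\phi-1)^2},\qquad \overline\psi=\tan^{-1}\!\left(\frac{\beta\underline m\sin\overline\phi}{\beta\underline m\cos\overline\phi-1}\right).$$ Let $\alpha\in\mathbb{R}$ and $\tau>0$. If $$\frac{\overline\rho+1}{\overline\rho\cos\overline\psi+1}-1<\alpha\tau,$$ then for every eigenvalue $\lambda_{K,i}$ of $K$, $$|\beta\lambda_{K,i}-1|-\big(\beta\,\mathrm{Re}\{\lambda_{K,i}\}-1\big)<\alpha\tau\,\mathrm{Re}\{\beta\lambda_{K,i}\}.$$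
   Context: The pinned Laplacian $K$ is obtained from a weighted digraph Laplacian $L$ (entries $l_{ik}=-w_{ik}$ for neighbors $k$ of $i$, $l_{ii}=\sum_m w_{im}$, else $0$, $w_{ik}>0$ for neighbors) on nodes $\{1,\dots,n+1\}$ by deleting the row and column of the source node $n+1$. Its eigenvalues have positive real parts. The concluded inequality is the sufficient condition for exponential stability of the delay system $\dot Z(t)=AZ(t)+A_dZ(t-\tau)$, $A=-\alpha\beta K+\frac1\tau[I-\beta K]$, $A_d=-\frac1\tau[I-\beta K]$. *)

(* Defs.v *)
From HB Require Import structures.
From mathcomp Require Import all_boot all_order all_algebra.
From mathcomp Require Import all_classical all_reals all_analysis.
From mathcomp Require Import complex.
Set Implicit Arguments. Unset Strict Implicit. Unset Printing Implicit Defensive.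
Import Order.TTheory GRing.Theory Num.Theory.
Local Open Scope ring_scope.

(* Weighted digraph Laplacian on nodes 'I_(n.+1) (node ord_max = source n+1).
   w i k is the weight of the edge from i to k; w i k > 0 iff k is a neighbor
   of i, w i k = 0 otherwise. *)
Definition is_weight (R : realType) (n : nat) (w : 'M[R]_n.+1) : Prop :=
  forall i k, 0 <= w i k.

Definition laplacian (R : realType) (n : nat) (w : 'M[R]_n.+1) : 'M[R]_n.+1 :=
  \matrix_(i, k) (if i == k then \sum_(m < n.+1 | m != i) w i m else - w i k).

(* pinned Laplacian: delete row and column of the source node ord_max *)
Definition pinned_laplacian (R : realType) (n : nat) (w : 'M[R]_n.+1) : 'M[R]_n :=
  \matrix_(i, k) laplacian w (widen_ord (leqnSn n) i) (widen_ord (leqnSn n) k).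

Definition eigenvalueC (R : realType) (n : nat) (A : 'M[R]_n) (lam : R[i]) : bool :=
  eigenvalue (map_mx (fun x => x%:C%C) A) lam.

(* Main.v *)
Require Import Defs.
From HB Require Import structures.
From mathcomp Require Import all_boot all_order all_algebra.
From mathcomp Require Import all_classical all_reals all_analysis.
From mathcomp Require Import complex.
From mathcomp Require Import ring lra.
Import Order.TTheory GRing.Theory Num.Theory.
Local Open Scope ring_scope.

Theorem corollary1 (R : realType) (n : nat) (w : 'M[R]_n.+1)
  (mlow mbar phibar beta alpha tau : R) :
  is_weight w ->
  let K := pinned_laplacian w in
  (* polar form of the eigenvalues: lambda = m e^{j phi} *)
  (forall lam : R[i], eigenvalueC K lam ->
     exists m phi : R, lam = ((m * cos phi) +i* (m * sin phi))%C /\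
       mlow <= m /\ m <= mbar /\ `|phi| <= phibar) ->
  0 < mlow ->
  phibar < pi / 2 ->
  0 < beta ->
  (forall lam : R[i], eigenvalueC K lam -> 1 / complex.Re lam < beta) ->
  1 < beta * mlow * cos phibar ->
  0 < tau ->
  let rhobar := Num.sqrt ((beta * mbar * sin phibar) ^+ 2
                          + (beta * mbar * cos phibar - 1) ^+ 2) in
  let psibar := atan ((beta * mlow * sin phibar) / (beta * mlow * cos phibar - 1)) in
  (rhobar + 1) / (rhobar * cos psibar + 1) - 1 < alpha * tau ->
  forall lam : R[i], eigenvalueC K lam ->
    (`|beta%:C%C * lam - 1| - (beta * complex.Re lam - 1)%:C%C
       < (alpha * tau * complex.Re (beta%:C%C * lam))%:C%C)%R.
Proof.
move=> _ K Hpol Hml Hphi Hb _ Hbc Ht rhobar psibar Hmain lam Hlam.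
have [m [phi [Hl [Hm1 [Hm2 Hphi']]]]] := Hpol lam Hlam.
subst lam.
rewrite normc_def ltcE /=.
apply/andP; split; first by apply/eqP; lra.
rewrite !mul0r !subr0 !addr0.
set c := cos phi; set s := sin phi; set C := cos phibar; set S := sin phibar. rewrite -/C in Hbc.
have hC : 0 < C.
  rewrite ltNge; apply/negP => h.
  have : beta * mlow * C <= 0 by apply: mulr_ge0_le0 => //; apply: mulr_ge0; lra.
  move=> ?; lra.
have hphib0 : 0 <= phibar by apply: le_trans Hphi'.
have hpi := pi_gt0 R.
have hS : 0 <= S by apply: sin_ge0_pi; apply/andP; split => //; lra.
have hcC : C <= c.
  rewrite /c -cos_norm.
  have [->|hlt] := eqVneq `|phi| phibar; first by [].
  have hlt' : `|phi| < phibar by rewrite lt_neqAle hlt.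
  apply: ltW; rewrite ltr_cos // in_itv /=; apply/andP; split => //; lra.
have hcs : c ^+ 2 + s ^+ 2 = 1 by rewrite /c /s cos2Dsin2.
have hCS : C ^+ 2 + S ^+ 2 = 1 by rewrite /C /S cos2Dsin2.
have hc1 : C <= 1 by apply: cos_le1.
set a := beta * mlow; set A := beta * m; set B := beta * mbar.
have hAa : a <= A by rewrite /a /A ler_pM2l.
have hBA : A <= B by rewrite /A /B ler_pM2l.
have ha : 0 < a by apply: mulr_gt0.
have haC : 1 < a * C by [].
have hsS : s ^+ 2 <= S ^+ 2 by nra.
set x := beta * (m * c) - 1; set y := beta * (m * s).
have hx : x = A * c - 1 by rewrite /x /A mulrA.
have hy : y = A * s by rewrite /y /A mulrA.
have hx0 : 0 < x by rewrite hx; nra.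
set rho := Num.sqrt (x ^+ 2 + y ^+ 2).
have hrho0 : 0 <= rho by apply: sqrtr_ge0.
have hrho2 : rho ^+ 2 = x ^+ 2 + y ^+ 2 by rewrite sqr_sqrtr // addr_ge0 // sqr_ge0.
have hrb0 : 0 <= rhobar by apply: sqrtr_ge0.
have hrb2 : rhobar ^+ 2 = B ^+ 2 - 2 * B * C + 1.
  rewrite sqr_sqrtr; last by rewrite addr_ge0 // sqr_ge0.
  rewrite -/B -/C -/S; nra.
have hrr : rho <= rhobar.
  rewrite /rho /rhobar ler_sqrt; last by rewrite addr_ge0 // sqr_ge0.
  rewrite -/B -/C -/S hx hy.
  have : A ^+ 2 - 2 * A * c + 1 <= B ^+ 2 - 2 * B * C + 1.
    have h1 : A * C <= A * c by apply: ler_wpM2l => //; nra.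
    have h2 : (B - A) * (B + A - 2 * C) >= 0.
      apply: mulr_ge0; first lra.
      have : 1 <= A * C by nra.
      nra.
    nra.
  nra.
set t := beta * mlow * S / (beta * mlow * C - 1).
have ht : t = a * S / (a * C - 1) by [].
set D := Num.sqrt (1 + t ^+ 2).
have hD0 : 0 < D by rewrite sqrtr_gt0; nra.
have hD2 : D ^+ 2 = 1 + t ^+ 2 by rewrite sqr_sqrtr // addr_ge0 // sqr_ge0.
have hcb : cos psibar = D^-1 by rewrite /psibar cos_atan.
have hcb0 : 0 < cos psibar by rewrite hcb invr_gt0.
have hcb1 : cos psibar <= 1 by apply: cos_le1.
have hxt : y ^+ 2 <= (x * t) ^+ 2.
  have haC1 : 0 < a * C - 1 by lra.
  have -> : x * t = x * a * S / (a * C - 1) by rewrite ht !mulrA.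
  rewrite expr_div_n ler_pdivlMr; last by apply: exprn_gt0.
  rewrite hx hy.
  have h1 : 0 <= A * (a * C - 1) by nra.
  have h2 : A * (a * C - 1) <= a * (A * c - 1) by nra.
  have h3 : (A * (a * C - 1)) ^+ 2 <= (a * (A * c - 1)) ^+ 2 by nra.
  have h4 : (A * s) ^+ 2 <= (A * S) ^+ 2 by nra.
  have h5 : (A * s) ^+ 2 * (a * C - 1) ^+ 2 <= (A * S) ^+ 2 * (a * C - 1) ^+ 2.
    by apply: ler_wpM2r => //; apply: sqr_ge0.
  have h6 : (A * (a * C - 1)) ^+ 2 * S ^+ 2 <= (a * (A * c - 1)) ^+ 2 * S ^+ 2.
    by apply: ler_wpM2r => //; apply: sqr_ge0.
  have e1 : (A * S) ^+ 2 * (a * C - 1) ^+ 2 = (A * (a * C - 1)) ^+ 2 * S ^+ 2 by ring.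
  have e2 : ((A * c - 1) * a * S) ^+ 2 = (a * (A * c - 1)) ^+ 2 * S ^+ 2 by ring.
  rewrite e2; rewrite e1 in h5; exact: le_trans h5 h6.
have hrD : rho <= x * D.
  have : rho ^+ 2 <= (x * D) ^+ 2.
    rewrite hrho2 (exprMn _ x D) hD2; nra.
  have : 0 <= x * D by nra.
  nra.
have hrc : rho * cos psibar <= x.
  by rewrite hcb -ler_pdivlMr ?invr_gt0 // invrK.
set cb := cos psibar in hcb0 hcb1 hrc Hmain *.
have hkey : (rho + 1) * (rhobar * cb + 1) <= (rhobar + 1) * (x + 1).
  have k1 : (rhobar + 1) * (rho * cb + 1) <= (rhobar + 1) * (x + 1).
    by apply: ler_wpM2l; lra.
  have k2 : 0 <= (rhobar - rho) * (1 - cb) by apply: mulr_ge0; lra.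
  have k3 : (rhobar + 1) * (rho * cb + 1) - (rho + 1) * (rhobar * cb + 1) = (rhobar - rho) * (1 - cb) by ring.
  lra.
have hden : 0 < rhobar * cb + 1 by nra.
have hQ : rho + 1 <= (rhobar + 1) / (rhobar * cb + 1) * (x + 1).
  by rewrite mulrAC ler_pdivlMr.
have hx1 : beta * (m * c) = x + 1 by rewrite /x; lra.
rewrite hx1 -/rho.
have : (rhobar + 1) / (rhobar * cb + 1) * (x + 1) < (1 + alpha * tau) * (x + 1).
  rewrite ltr_pM2r; lra.
lra.
Qed.
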